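(* Let $p\ge q$ and $n\ge 1$ be positive integers and let $B$ be a $p\times q$ matrix such that $B^T$ has full row rank. Let $C$ be the $(nq+p)\times(nq+p)$ block matrix $$C=\begin{bmatrix} 0 & B & B & \cdots & B\\ B^T & 0 & I & \cdots & I\\ B^T & I & 0 & \cdots & I\\ \vdots & \vdots & \vdots & \ddots & \vdots\\ B^T & I & I & \cdots & 0\end{bmatrix}$$ (one block of size $p$ followed by $n$ blocks of size $q$), and let $D$ be the $(np+q)\times(np+q)$ block matrix $$D=\begin{bmatrix} 0 & B^T & B^T & \cdots & B^T\\ B & 0 & I & \cdots & I\\ B & I & 0 & \cdots & I\\ \vdots & \vdots & \vdots & \ddots & \vdots\\ B & I & I & \cdots & 0\end{bmatrix}$$ (one block of size $q$ followed by $n$ blocks of size $p$). Then $C$ has $0$ as an eigenvalue with multiplicity at least $p-q$, and $D$ has $n-1$ as an eigenvalue with multiplicity at least $p-q$.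
   Context: $I$ denotes an identity matrix and $0$ a zero matrix of appropriate size. *)

(* Defs.v *)
From HB Require Import structures.
From mathcomp Require Import all_boot all_order all_algebra.
Set Implicit Arguments. Unset Strict Implicit. Unset Printing Implicit Defensive.
Import Order.TTheory GRing.Theory Num.Theory.
Local Open Scope ring_scope.

Definition mx_nat (R : nmodType) (m k : nat) (X : 'M[R]_(m, k)) (a b : nat) : R :=
  match @insub nat (fun i => i < m)%N 'I_m a, @insub nat (fun j => j < k)%N 'I_k b with
  | Some a', Some b' => X a' b'
  | _, _ => 0
  end.

(* For X : 'M_(m,k), the (m + n*k) x (m + n*k) block matrix
      [ 0    X  X ... X ]
      [ X^T  0  I ... I ]
      [ X^T  I  0 ... I ]
      [ ...             ]
      [ X^T  I  I ... 0 ]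
   with one block of size m followed by n blocks of size k.
   Row index i >= m lies in block (i-m) %/ k at offset (i-m) %% k. *)
Definition blockmx (R : pzRingType) (m k : nat) (X : 'M[R]_(m, k)) (n : nat)
  : 'M[R]_(m + n * k) :=
  \matrix_(i, j)
    let i := nat_of_ord i in let j := nat_of_ord j in
    if (i < m)%N then
      (if (j < m)%N then 0 else mx_nat X i ((j - m) %% k)%N)
    else if (j < m)%N then mx_nat X j ((i - m) %% k)%N
    else if ((i - m) %/ k == (j - m) %/ k)%N then 0
    else ((i - m) %% k == (j - m) %% k)%N%:R.

(* Main.v *)
Require Import Defs.
From HB Require Import structures.
From mathcomp Require Import all_boot all_order all_algebra.
Import Order.TTheory GRing.Theory Num.Theory.
Local Open Scope ring_scope.

Lemma mx_natE (R : nmodType) m k (X : 'M[R]_(m,k)) (i : 'I_m) (j : 'I_k) :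
  mx_nat X i j = X i j.
Proof.
rewrite /mx_nat (insubT (fun i => i < m)%N (ltn_ord i)) (insubT (fun j => j < k)%N (ltn_ord j)).
by congr (X _ _); apply: val_inj.
Qed.

Lemma modsum (R : nmodType) (F : nat -> R) p n :
  \sum_(l < n * p) F (l %% p)%N = (\sum_(l < p) F l) *+ n.
Proof.
elim: n => [|n IH]; first by rewrite mul0n big_ord0 mulr0n.
rewrite mulrS -(big_mkord xpredT (fun l => F (l %% p)%N)) -(big_mkord xpredT F) mulSn (big_cat_nat (n:=p)) ?leq_addr //=.
rewrite (@big_addn _ 0 +%R 0 (p + n * p) p) addKn.
have -> : \sum_(0 <= i < n * p) F ((i+p) %% p)%N = \sum_(0<=i<n * p) F (i %% p)%N by apply: eq_bigr => i _; rewrite modnDr.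
rewrite [X in _ + X](big_mkord xpredT (fun l => F (l %% p)%N)) IH -(big_mkord xpredT F); congr (_ + _).
by apply: eq_big_nat => l /andP[_ lp]; rewrite modn_small.
Qed.

Lemma row_free_of (R : fieldType) k N M (V : 'M[R]_(k,N)) (S : 'M[R]_(N,M)) W :
  row_free W -> V *m S = W -> row_free V.
Proof.
move=> fW VS; rewrite /row_free eqn_leq rank_leq_row /=.
by rewrite -{1}(eqP fW) -VS mxrankM_maxl.
Qed.
Lemma char_poly_simil (R : fieldType) N (A P : 'M[R]_N) :
  P \in unitmx -> char_poly (P *m A *m invmx P) = char_poly A.
Proof.
move=> Pu.
have E : char_poly_mx (P *m A *m invmx P) =
   map_mx polyC P *m char_poly_mx A *m map_mx polyC (invmx P).
  rewrite /char_poly_mx !map_mxM mulmxBr mulmxBl; congr (_ - _).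

  by rewrite scalar_mxC -mulmxA -map_mxM mulmxV // map_mx1 mulmx1.
rewrite /char_poly E !det_mulmx !det_map_mx mulrC mulrA -rmorphM.
by rewrite -det_mulmx mulVmx // det1 rmorph1 mul1r.
Qed.

Lemma alg_geo (R : fieldType) N k (A : 'M[R]_N) (V : 'M[R]_(k, N)) a :
  row_free V -> V *m A = a *: V -> (k <= mup a (char_poly A))%N.
Proof.
move=> /eqP rV eqV.
set L := col_ebase V; set P := row_ebase V.
have hV : L *m pid_mx k *m P = V by have := mulmx_ebase V; rewrite rV.
have Lu : L \in unitmx := col_ebase_unit V.
have Pu : P \in unitmx := row_ebase_unit V.
have hkN : (k <= N)%N by rewrite -rV rank_leq_col.
have hpid : (pid_mx k : 'M_(k,N)) *m (P *m A *m invmx P) = a *: pid_mx k.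
  have := congr1 (fun M => invmx L *m M *m invmx P) eqV.
  rewrite -hV /= !mulmxA mulVmx // mul1mx => ->.
  by rewrite -scalemxAr -scalemxAl !mulmxA mulVmx // mul1mx -mulmxA mulmxV // mulmx1.
set A' := P *m A *m invmx P.
have rows : forall (i j : 'I_N), (i < k)%N -> A' i j = a * (i == j)%:R.
  move=> i j ik.
  have := congr1 (fun M : 'M[R]_(k,N) => M (Ordinal ik) j) hpid.
  rewrite !mxE /= (bigD1 i) //= big1 => [|l /negbTE lni].
    by rewrite !mxE eqxx ik mul1r addr0 => ->; rewrite andbT.
  by rewrite mxE /= eq_sym (lni : (nat_of_ord l == nat_of_ord i) = false) mul0r.
rewrite -(@char_poly_simil _ _ A _ Pu) -/A'. clearbody A'.
set x := ('X - a%:P).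
set d := \row_(i < N) (if (i < k)%N then x else 1).
set M' := \matrix_(i < N, j < N) (if (i < k)%N then (i == j)%:R else char_poly_mx A' i j).
have E : char_poly_mx A' = diag_mx d *m M'.
  rewrite mul_diag_mx; apply/matrixP => i j; rewrite !mxE.
  case: ifP => ik; last by rewrite mul1r.
  rewrite rows // /x; case: (i == j); rewrite ?mulr1n ?mulr0n ?mulr1 ?mulr0 //.
  by rewrite polyC0 subr0.
rewrite mup_geq ?monic_neq0 ?char_poly_monic //.
rewrite /char_poly E det_mulmx det_diag; apply: dvdp_mulr.
rewrite (eq_bigr (fun i : 'I_N => if (i < k)%N then x else 1)) => [|i _]; last by rewrite mxE.
rewrite -big_mkcond /= -(@big_ord_widen _ 1 *%R k N (fun _ => x) hkN) /=.
by rewrite prodr_const card_ord.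
Qed.

Theorem lemma3p14 (R : realFieldType) (p q n : nat) (B : 'M[R]_(p, q)) :
  (0 < q)%N -> (q <= p)%N -> (1 <= n)%N -> \rank B^T = q ->
  (p - q <= mup 0 (char_poly (blockmx B n)))%N /\
  (p - q <= mup (n%:R - 1) (char_poly (blockmx B^T n)))%N.
Proof.
move=> q0 qp n1 rBt.
have p0 : (0 < p)%N by apply: leq_trans qp.
have rB : \rank B = q by rewrite -mxrank_tr.
set K := row_base (kermx B).
have rK : \rank (kermx B) = (p - q)%N by rewrite mxrank_ker rB.
have KB : K *m B = 0 by apply/eqP; rewrite -sub_kermx eq_row_base.
have fK : row_free K := row_base_free _.
clearbody K.
rewrite -rK; split.
- set V := row_mx K (0 : 'M[R]_(\rank (kermx B), n * q)).
  apply: (@alg_geo _ _ _ _ V).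
    apply: (@row_free_of _ _ _ _ V (col_mx 1%:M 0) K fK).
    by rewrite mul_row_col mulmx1 mul0mx addr0.
  rewrite scale0r; apply/matrixP => i j; rewrite !mxE big_split_ord /=.
  rewrite [X in _ + X]big1 ?addr0 => [|l _]; last by rewrite row_mxEr mxE mul0r.
  rewrite -(splitK j); case: (split j) => j' /=.
    by apply: big1 => l _; rewrite row_mxEl /blockmx mxE /= ltn_ord ltn_ord mulr0.
  rewrite (eq_bigr (fun l => K i l * B l (Ordinal (ltn_pmod j' q0)))) => [|l _].
    by have := congr1 (fun M : 'M[R]_(_, q) => M i (Ordinal (ltn_pmod j' q0))) KB; rewrite !mxE => ->.
  rewrite row_mxEl /blockmx mxE /= ltn_ord ltnNge leq_addr /= addKn.
  by rewrite -(@mx_natE _ _ _ B l (Ordinal (ltn_pmod j' q0))).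
- have npP : (p <= n * p)%N by rewrite leq_pmull.
  set W := \matrix_(i < \rank (kermx B), j < n * p) mx_nat K i (j %% p)%N.
  set V := row_mx (0 : 'M[R]_(\rank (kermx B), q)) W.
  apply: (@alg_geo _ _ _ _ V).
    set S := \matrix_(j < n * p, l < p) ((j == l :> nat)%:R : R).
    apply: (@row_free_of _ _ _ _ V (col_mx 0 S) K fK).
    rewrite mul_row_col mul0mx add0r; apply/matrixP => i l; rewrite !mxE.
    rewrite (bigD1 (widen_ord npP l)) //= big1 => [|j /negbTE jl].
      by rewrite !mxE eqxx mulr1 addr0 /= modn_small // mx_natE.
    by rewrite !mxE (_ : (nat_of_ord j == l) = false) ?mulr0 // -jl.
  apply/matrixP => i j; rewrite [LHS]mxE [RHS]mxE big_split_ord /=.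
  rewrite [X in X + _]big1 ?add0r => [|l _]; last by rewrite row_mxEl mxE mul0r.
  rewrite -(splitK j); case: (split j) => j' /=.
    rewrite row_mxEl mxE mulr0.
    rewrite (eq_bigr (fun l : 'I_(n * p) => (fun t => mx_nat K i t * mx_nat B^T j' t) (l %% p)%N)) => [|l _].
      rewrite (@modsum _ (fun t => mx_nat K i t * mx_nat B^T j' t) p n) (eq_bigr (fun t => K i t * B t j')) => [|t _].
        by have := congr1 (fun M : 'M[R]_(_, q) => M i j') KB; rewrite !mxE => ->; rewrite mul0rn.
      by rewrite !mx_natE mxE.
    rewrite row_mxEr /blockmx !mxE /= ltn_ord ltnNge leq_addr /= addKn.
    by [].
  have S1 : \sum_(t < p) mx_nat K i t * ((nat_of_ord t == j' %% p)%N)%:R = mx_nat K i (j' %% p)%N.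
    rewrite (bigD1 (Ordinal (ltn_pmod j' p0))) //= eqxx mulr1 big1 ?addr0 // => t /negbTE tn.
    by rewrite (_ : (nat_of_ord t == j' %% p)%N = false) ?mulr0 // -tn.
  have S2 : \sum_(l < n * p) mx_nat K i (j' %% p)%N * ((l == j' :> nat))%:R = mx_nat K i (j' %% p)%N.
    rewrite (bigD1 j') //= eqxx mulr1 big1 ?addr0 // => l /negbTE lj.
    by rewrite (_ : (nat_of_ord l == j')%N = false) ?mulr0 // -lj.
  rewrite row_mxEr.
  rewrite (eq_bigr (fun l : 'I_(n * p) => (fun t => mx_nat K i t * ((t == j' %% p)%N)%:R) (l %% p)%N
        - mx_nat K i (j' %% p)%N * ((l == j' :> nat))%:R)) => [|l _].
    rewrite sumrB (@modsum _ (fun t => mx_nat K i t * ((t == j' %% p)%N)%:R) p n) S1 S2.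
    by rewrite mxE mulrBl mul1r mulr_natl.
  have qf x : (q + x < q)%N = false by rewrite ltnNge leq_addr.
  rewrite row_mxEr /blockmx !mxE /= !addKn !qf.
  case: (eqVneq (l : nat) j') => [->|lj]; first by rewrite !eqxx mulr0 mulr1 subrr.
  rewrite mulr0 subr0; case: ifP => hq //.
  rewrite (_ : (l %% p == j' %% p)%N = false) ?mulr0 //.
  apply/negP => /eqP hm; move: lj.
  by rewrite (divn_eq l p) (divn_eq j' p) (eqP hq) hm eqxx.
Qed.
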